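(* Let $d\ge1$. For integers $0\le m\le n$, $0\le j\le m/2$ and $1\le\ell\le\dim\mathcal H_{m-2j}^d$, $$Q_{m,j,\ell}^{n,-1} = a_{m,j}\Big[\big(Q_{m,j,\ell}^{n,0}-b_{m,n}Q_{m-2,j-1,\ell}^{n,0}\big) - 2\big(Q_{m,j,\ell}^{n-1,0}-c_{m,n}Q_{m-2,j-1,\ell}^{n-1,0}\big) + \big(Q_{m,j,\ell}^{n-2,0}-d_{m,n}Q_{m-2,j-1,\ell}^{n-2,0}\big)\Big],$$ where $a_{m,j}=\frac{2m-2j+d-2}{2m+d-2}$ (with $a_{0,0}=1$ when $d=2$), $b_{m,n}=(n-m+1)(n-m+2)$, $c_{m,n}=(n+m+d-2)(n-m+1)$ and $d_{m,n}=(n+m+d-2)(n+m+d-3)$.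
   Context: For real $\alpha$ define $L_n^{\alpha}(t)=\sum_{k=0}^n \frac{(\alpha+k+1)_{n-k}}{(n-k)!}\frac{(-t)^k}{k!}$, and for real $\alpha,\beta$ define $P_n^{(\alpha,\beta)}(s)=\sum_{k=0}^n \frac{(\alpha+k+1)_{n-k}(n+\alpha+\beta+1)_k}{k!\,(n-k)!}\left(\frac{s-1}{2}\right)^k$ (classical Laguerre and Jacobi polynomials, extended polynomially in the parameters); $(a)_k$ is the Pochhammer symbol. For an integer $p\ge0$, $\mathcal H_p^d$ is the space of homogeneous harmonic polynomials of degree $p$ in $d$ variables (for $d=1$: $\mathcal H_0^1=\mathrm{span}\{1\}$, $\mathcal H_1^1=\mathrm{span}\{x\}$, $\mathcal H_p^1=\{0\}$ for $p\ge2$), and $\{Y_\ell^p\}$ is an orthonormal basis of it with respect to the normalized surface measure on the unit sphere $\mathbb S^{d-1}$. For $\mu\ge-1$ and integers $0\le m\le n$, $0\le j\le m/2$, $1\le \ell\le \dim\mathcal H^d_{m-2j}$, $$Q_{m,j,\ell}^{n,\mu}(x,t)=L_{n-m}^{2m+2\mu+d}(t)\,t^{2j}\,P_j^{(\mu,\,m-2j+\frac{d-2}{2})}\!\left(2\frac{\|x\|^2}{t^2}-1\right)Y_\ell^{m-2j}(x),\qquad x\in\mathbb R^d,\ t\in\mathbb R.$$ Convention: $Q_{m',j',\ell}^{n',\mu}:=0$ whenever $m'<0$, $j'<0$, or $n'<m'$. *)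

(* Defs.v *)
From HB Require Import structures.
From mathcomp Require Import all_boot all_order all_algebra.
From mathcomp Require Import mpoly.
From mathcomp Require Import ring.
Set Implicit Arguments. Unset Strict Implicit. Unset Printing Implicit Defensive.
Import Order.TTheory GRing.Theory Num.Theory.
Local Open Scope ring_scope.

Section Defs.
Variable R : realFieldType.

Definition poch (a : R) (k : nat) : R := \prod_(i < k) (a + i%:R).

Definition laguerre (n : nat) (al t : R) : R :=
  \sum_(k < n.+1) (poch (al + k%:R + 1) (n - k) / (n - k)`!%:R)
                  * ((- t) ^+ k / k`!%:R).

Definition jacobi (n : nat) (al be s : R) : R :=
  \sum_(k < n.+1) (poch (al + k%:R + 1) (n - k) * poch (n%:R + al + be + 1) k
                   / (k`!%:R * (n - k)`!%:R)) * ((s - 1) / 2) ^+ k.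

(* The polynomial  t^(2j) P_j^(al,be)(2 r / t^2 - 1), written without the
   division: t^(2j) ((2r/t^2 - 1 - 1)/2)^k = (r - t^2)^k t^(2(j-k)).
   See jacobi_homE below: it agrees with the literal expression for t <> 0. *)
Definition jacobi_hom (j : nat) (al be r t : R) : R :=
  \sum_(k < j.+1) (poch (al + k%:R + 1) (j - k) * poch (j%:R + al + be + 1) k
                   / (k`!%:R * (j - k)`!%:R)) * ((r - t ^+ 2) ^+ k * t ^+ (2 * (j - k))).

Lemma jacobi_homE j al be r t : t != 0 ->
  jacobi_hom j al be r t = t ^+ (2 * j) * jacobi j al be (2 * r / t ^+ 2 - 1).
Proof.
move=> t0; rewrite /jacobi_hom /jacobi mulr_sumr; apply: eq_bigr => k _.
rewrite [RHS]mulrCA; congr (_ * _).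
have hk : (k <= j)%N by rewrite -ltnS.
have -> : (2 * r / t ^+ 2 - 1 - 1) / 2 = (r - t ^+ 2) / t ^+ 2.
  by field; rewrite ?expf_neq0.
rewrite expr_div_n; set jk := (j - k)%N.
have -> : (2 * j = 2 * jk + 2 * k)%N by rewrite -mulnDr subnK.
rewrite exprD -exprM; field; by rewrite expf_neq0.
Qed.

Variable d : nat.

Definition sqnorm (x : 'I_d -> R) : R := \sum_(i < d) x i ^+ 2.

Definition laplacian (Y : {mpoly R[d]}) : {mpoly R[d]} :=
  \sum_(i < d) mderiv i (mderiv i Y).

Definition harmonic_homog (p : nat) (Y : {mpoly R[d]}) : bool :=
  (Y \is p.-homog) && (laplacian Y == 0).

(* Q_{m,j,l}^{n,mu}(x,t) with Y = Y_l^{m-2j}; indices are integers and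
   Q := 0 whenever m < 0, j < 0 or n < m. *)
Definition Qpoly (mu : R) (n m j : int) (Y : {mpoly R[d]}) (x : 'I_d -> R) (t : R) : R :=
  if (m < 0) || (j < 0) || (n < m) then 0 else
  let n' := `|n|%N in let m' := `|m|%N in let j' := `|j|%N in
  laguerre (n' - m') (2 * m'%:R + 2 * mu + d%:R) t
  * jacobi_hom j' mu ((m' - 2 * j')%N%:R + (d%:R - 2) / 2) (sqnorm x) t
  * Y.@[x].

Definition acoef (m j : nat) : R :=
  if (m == 0%N) && (d == 2%N) then 1
  else (2 * m%:R - 2 * j%:R + d%:R - 2) / (2 * m%:R + d%:R - 2).

Definition bcoef (m n : nat) : R := (n%:R - m%:R + 1) * (n%:R - m%:R + 2).
Definition ccoef (m n : nat) : R := (n%:R + m%:R + d%:R - 2) * (n%:R - m%:R + 1).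
Definition dcoef (m n : nat) : R := (n%:R + m%:R + d%:R - 2) * (n%:R + m%:R + d%:R - 3).

End Defs.

(* Main.v *)
Require Import Defs.
From HB Require Import structures.
From mathcomp Require Import all_boot all_order all_algebra.
From mathcomp Require Import mpoly.
From mathcomp Require Import ring zify lra.
Import Order.TTheory GRing.Theory Num.Theory.
Local Open Scope ring_scope.

Section Lag.
Variable R : realFieldType.
Implicit Types (a b t : R).

Lemma poch0 (a : R) : poch a 0 = 1.
Proof. by rewrite /poch big_ord0. Qed.

Lemma pochSl (a : R) p : poch a p.+1 = a * poch (a + 1) p.
Proof.
rewrite /poch big_ord_recl /= addr0; congr (_ * _).
by apply: eq_bigr => i _; rewrite /bump /= natrD addrA.
Qed.

Lemma pochSr (a : R) p : poch a p.+1 = poch a p * (a + p%:R).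
Proof. by rewrite /poch big_ord_recr. Qed.

Lemma fact_neq0 k : (k`!%:R : R) != 0.
Proof. by rewrite pnatr_eq0 -lt0n fact_gt0. Qed.

Lemma natS_neq0 k : (k.+1%:R : R) != 0.
Proof. by rewrite pnatr_eq0. Qed.

Definition Lp n a : {poly R} :=
  \poly_(k < n.+1) (poch (a + k%:R + 1) (n - k) / (n - k)`!%:R * ((-1) ^+ k / k`!%:R)).

Lemma lagE n a t : laguerre n a t = (Lp n a).[t].
Proof.
rewrite /laguerre /Lp horner_poly; apply: eq_bigr => k _.
by rewrite [(- t) ^+ _]exprNn; ring.
Qed.


Lemma LA n a : Lp n.+1 a = Lp n.+1 (a + 1) - Lp n (a + 1).
Proof.
apply/polyP => k; rewrite coefB !coef_poly.
case: (ltnP k n.+1) => hk.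
  have hk' : (k < n.+2)%N by rewrite ltnS ltnW.
  rewrite hk'.
  have [p ->] : exists p, n = (k + p)%N by exists (n - k)%N; rewrite subnKC // -ltnS.
  rewrite -addnS !addKn.
  have e : a + 1 + k%:R + 1 = a + k%:R + 1 + 1 by ring.
  rewrite e pochSl pochSr factS natrM.
  have := fact_neq0 p; have := fact_neq0 k; have := natS_neq0 p.
  have ep : (p.+1%:R : R) = p%:R + 1 by rewrite -addn1 natrD.
  rewrite ep => h1 h2 h3.
  by field; rewrite ?h1 ?h2 ?h3.
case: (ltnP k n.+2) => hk2.
  have -> : k = n.+1 by apply/eqP; rewrite eqn_leq hk -ltnS hk2.
  by rewrite subnn !poch0 subr0.
by rewrite subr0.
Qed.

Lemma natS (k : nat) : (k.+1%:R : R) = k%:R + 1.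
Proof. by rewrite -addn1 natrD. Qed.

Lemma LB n a : 'X * Lp n (a + 1) = (n%:R + a + 1) *: Lp n a - (n.+1)%:R *: Lp n.+1 a.
Proof.
apply/polyP => k; rewrite coefXM coefB !coefZ !coef_poly.
case: k => [|i] /=.
  rewrite !subn0 !expr0 pochSr factS !natrM addr0.
  have := fact_neq0 n; have := natS_neq0 n; rewrite !natS => h2 h1.
  by field; rewrite ?h1 ?h2.
case: (ltnP i n) => hi.
  have [p ->] : exists p, n = (i.+1 + p)%N by exists (n - i.+1)%N; rewrite subnKC.
  have h5 : (i < (i.+1 + p).+1)%N by lia.
  have h6 : (i.+1 < (i.+1 + p).+1)%N by lia.
  have h7 : (i.+1 < (i.+1 + p).+2)%N by lia.
  rewrite h5 h6 h7.
  have -> : (i.+1 + p - i = p.+1)%N by lia.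
  have -> : ((i.+1 + p).+1 - i.+1 = p.+1)%N by lia.
  have -> : (i.+1 + p - i.+1 = p)%N by lia.
  have e : a + 1 + i%:R + 1 = a + i.+1%:R + 1 by rewrite natS; ring.
  rewrite e pochSr !factS !natrM exprS.
  have := fact_neq0 p; have := fact_neq0 i; have := natS_neq0 p; have := natS_neq0 i.
  rewrite !natS !natrD ?natS => h3 h4 h1 h2.
  by field; rewrite ?h1 ?h2 ?h3 ?h4.
case: (ltnP n i) => hi2.
  have h5 : (i < n.+1)%N = false by lia.
  have h6 : (i.+1 < n.+1)%N = false by lia.
  have h7 : (i.+1 < n.+2)%N = false by lia.
  by rewrite h5 h6 h7 !mulr0 subr0.
have -> : i = n by apply/eqP; rewrite eqn_leq hi hi2.
rewrite ltnSn ltnn subSS !subnn !poch0 mulr0 sub0r factS natrM exprS.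
have := fact_neq0 n; have := natS_neq0 n; rewrite !natS => h1 h2.
rewrite ltnSn; by field; rewrite ?h1 ?h2.
Qed.

Lemma LBn n b t : t * laguerre n b t =
  (n%:R + b) * laguerre n (b - 1) t - (n.+1)%:R * laguerre n.+1 (b - 1) t.
Proof.
have := congr1 (fun q => q.[t]) (LB n (b - 1)); rewrite /= subrK.
rewrite !lagE mulrC hornerMX hornerD hornerN !hornerZ mulrC => ->.
by have -> : n%:R + (b - 1) + 1 = n%:R + b by ring.
Qed.

Lemma L2 N al t : t ^+ 2 * laguerre N al t =
  (N.+1%:R * N.+2%:R) * laguerre N.+2 (al - 2) t
  - 2 * ((N%:R + al) * N.+1%:R) * laguerre N.+1 (al - 2) t
  + ((N%:R + al) * (N%:R + al - 1)) * laguerre N (al - 2) t.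
Proof.
rewrite expr2 -mulrA LBn mulrBr (mulrCA t (N%:R + al)) (mulrCA t N.+1%:R) !LBn.
have e : al - 1 - 1 = al - 2 by ring.
rewrite e.
move: (laguerre N (al-2) t) (laguerre N.+1 (al-2) t) (laguerre N.+2 (al-2) t) => u0 u1 u2.
rewrite !natS. ring.
Qed.

Lemma lag0 a t : laguerre 0 a t = 1.
Proof. by rewrite /laguerre big_ord1 /= subnn poch0 expr0 fact0 mulr1n invr1 !mulr1. Qed.

Definition lagz (N : int) a t := if (N < 0) then 0 else laguerre `|N|%N a t.

Lemma LAz N a t : lagz N a t = lagz N (a + 1) t - lagz (N - 1) (a + 1) t.
Proof.
rewrite /lagz; case: N => [k|k].
  case: k => [|k].
    by rewrite /= !lag0 subr0.
  have -> : (Posz k.+1 - 1 = Posz k) by rewrite -addn1 PoszD addrK.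
  by rewrite /= !lagE LA hornerD hornerN.
have -> : (Negz k - 1 < 0) by lia.
by rewrite /= subr0.
Qed.

Lemma L1z N a t : lagz N a t =
  lagz N (a + 2) t - 2 * lagz (N - 1) (a + 2) t + lagz (N - 2) (a + 2) t.
Proof.
rewrite [LHS]LAz (LAz N (a + 1)) (LAz (N - 1) (a + 1)).
have -> : a + 1 + 1 = a + 2 by ring.
have -> : N - 1 - 1 = N - 2 by ring.
ring.
Qed.

Lemma poch_shift a k : poch a k * (a + k%:R) = a * poch (a + 1) k.
Proof. by rewrite -pochSr pochSl. Qed.

Lemma J0 al be r t : jacobi_hom 0 al be r t = 1.
Proof.
by rewrite /jacobi_hom big_ord1 /= subnn !poch0 !expr0 fact0 !(mulr1, mul1r, mulr1n, invr1).
Qed.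

Lemma comb (c1 c2 S1 T1 S2 T2 S3 v : R) : c1 * S1 = c2 * (S2 - v * S3) ->
  c1 * T1 = c2 * T2 -> c1 * (S1 + T1) = c2 * (S2 + T2 - v * S3).
Proof. by move=> h1 h2; rewrite mulrDr h1 h2; ring. Qed.

Lemma J1 j be r t : (2 * j.+1%:R + be) * jacobi_hom j.+1 (-1) be r t =
  (j.+1%:R + be) * (jacobi_hom j.+1 0 be r t - t ^+ 2 * jacobi_hom j 0 be r t).
Proof.
rewrite /jacobi_hom big_ord_recr [X in _ = _ * (X - _)]big_ord_recr /=.
set c1 := 2 * j.+1%:R + be; set c2 := j.+1%:R + be.
apply: comb; last first.
  rewrite subnn !poch0 !mul1r muln0 !expr0 fact0 !mulr1.
  have -> : j.+1%:R - 1 + be + 1 = c2 by rewrite /c2; ring.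
  have -> : j.+1%:R + 0 + be + 1 = c2 + 1 by rewrite /c2; ring.
  have -> : c1 = c2 + j.+1%:R by rewrite /c1 /c2; ring.
  transitivity (poch c2 j.+1 * (c2 + j.+1%:R) / (j.+1)`!%:R * (r - t ^+ 2) ^+ j.+1).
    by ring.
  by rewrite poch_shift; ring.
rewrite [t ^+ 2 * _]mulr_sumr -sumrB mulr_sumr [RHS]mulr_sumr; apply: eq_bigr => [[k hk]] _ /=.
have [p ep] : exists p, j = (k + p)%N by exists (j - k)%N; rewrite subnKC // -ltnS.
rewrite /c1 /c2 ep.
have -> : ((k + p).+1 - k = p.+1)%N by lia.
have -> : (k + p - k = p)%N by lia.
rewrite mulnS exprD.
have -> : -1 + k%:R + 1 = k%:R :> R by ring.
have -> : 0 + k%:R + 1 = k%:R + 1 :> R by ring.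
rewrite pochSl pochSr factS natrM.
have := fact_neq0 p; have := natS_neq0 p.
case: k {hk ep} => [|k].
  rewrite !poch0 ?add0n ?natS => h1 h3.
  by field; rewrite ?h1 ?h3.
set B := (k.+1 + p)%:R + be + 1.
have -> : (k.+1 + p).+1%:R - 1 + be + 1 = B by rewrite /B natS; ring.
have -> : (k.+1 + p)%:R + 0 + be + 1 = B by rewrite /B; ring.
have -> : (k.+1 + p).+1%:R + 0 + be + 1 = B + 1 by rewrite /B natS; ring.
rewrite pochSl pochSr factS natrM.
have := fact_neq0 k; have := natS_neq0 k.
rewrite /B !natS !natrD ?natS => h4 h2 h1 h3.
by field; rewrite ?h1 ?h2 ?h3 ?h4.
Qed.

Lemma QpolyE d mu (n : int) (m j : nat) (Y : {mpoly R[d]}) x t :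
  Qpoly mu n m j Y x t = lagz (n - m%:Z) (2 * m%:R + 2 * mu + d%:R) t *
    jacobi_hom j mu ((m - 2 * j)%N%:R + (d%:R - 2) / 2) (sqnorm x) t * Y.@[x].
Proof.
rewrite /Qpoly /lagz /=.
case: n => [n'|n'].
  case: (leqP m n') => h.
    have h1 : (Posz n' < Posz m) = false by lia.
    have h2 : (Posz n' - Posz m < 0) = false by lia.
    rewrite h1 h2 /= subzn //.
  have h1 : (Posz n' < Posz m) = true by lia.
  have h2 : (Posz n' - Posz m < 0) = true by lia.
  by rewrite h1 h2 /= !mul0r.
have h1 : (Negz n' < Posz m) = true by lia.
have h2 : (Negz n' - Posz m < 0) = true by lia.
by rewrite h1 h2 /= !mul0r.
Qed.

Lemma QpolyN d mu (n m j : int) (Y : {mpoly R[d]}) x t :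
  (j < 0) -> Qpoly mu n m j Y x t = 0.
Proof. by move=> h; rewrite /Qpoly h orbT. Qed.

End Lag.

Lemma aux_pos (R : realFieldType) (M D : R) : 2 <= M -> 0 <= D -> 2 * M + D - 2 != 0.
Proof. move=> h1 h2; apply/eqP => h3; lra. Qed.

Theorem proposition2p2 (R : realFieldType) (d : nat) (hd : (1 <= d)%N)
  (n m j : nat) (hmn : (m <= n)%N) (hj : (2 * j <= m)%N)
  (Y : {mpoly R[d]}) (hY : harmonic_homog (m - 2 * j) Y)
  (x : 'I_d -> R) (t : R) :
  Qpoly (-1) n m j Y x t =
  acoef R d m j *
    ((Qpoly 0 n m j Y x t
        - bcoef R m n * Qpoly 0 n (m%:Z - 2) (j%:Z - 1) Y x t)
     - 2 * (Qpoly 0 (n%:Z - 1) m j Y x t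
        - ccoef R d m n * Qpoly 0 (n%:Z - 1) (m%:Z - 2) (j%:Z - 1) Y x t)
     + (Qpoly 0 (n%:Z - 2) m j Y x t
        - dcoef R d m n * Qpoly 0 (n%:Z - 2) (m%:Z - 2) (j%:Z - 1) Y x t)).
Proof.
have [N eN] : exists N, n = (m + N)%N by exists (n - m)%N; rewrite subnKC.
subst n.
rewrite !QpolyE.
have e0 : Posz (m + N) - Posz m = Posz N by lia.
have e1 : Posz (m + N) - 1 - Posz m = Posz N - 1 by lia.
have e2 : Posz (m + N) - 2 - Posz m = Posz N - 2 by lia.
rewrite e0 e1 e2.
set al := 2 * m%:R + 2 * -1 + d%:R.
have -> : 2 * m%:R + 2 * 0 + d%:R = al + 2 by rewrite /al; ring.
have lagzP : forall k a, lagz R (Posz k) a t = laguerre k a t by [].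
set be := (m - 2 * j)%N%:R + (d%:R - 2) / 2.
set y := Y.@[x]; set r := sqnorm x.
case: j hj hY @be => [|j] hj hY be.
  have Z : forall mu n' m', Qpoly mu n' m' (0%:Z - 1) Y x t = 0 by move=> *; apply QpolyN.
  rewrite !Z !J0 !mulr0 !subr0 (L1z _ N al).
  have -> : acoef R d m 0 = 1.
    rewrite /acoef; case: ifP => // h.
    have hn : 2 * m%:R + d%:R - 2 != 0 :> R.
      apply/eqP => h2.
      have : ((2 * m + d)%N%:R : R) = 2%:R.
        by rewrite natrD natrM; apply/eqP; rewrite -subr_eq0 h2.
      move/eqP; rewrite eqr_nat => /eqP h3.
      move: h; have -> : m = 0%N by lia.
      have -> : d = 2%N by lia.
      by [].
    by rewrite mulr0 subr0 divff.
  ring.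
have hm : (2 <= m)%N by lia.
have em : Posz m - 2 = Posz (m - 2)%N by lia.
have ej : Posz j.+1 - 1 = Posz j by lia.
rewrite em ej !QpolyE.
have f0 : Posz (m + N) - Posz (m - 2) = Posz N.+2 by lia.
have f1 : Posz (m + N) - 1 - Posz (m - 2) = Posz N.+1 by lia.
have f2 : Posz (m + N) - 2 - Posz (m - 2) = Posz N by lia.
have ebe : (m - 2 - 2 * j)%N = (m - 2 * j.+1)%N by lia.
rewrite f0 f1 f2 ebe -/be !lagzP.
have -> : 2 * (m - 2)%N%:R + 2 * 0 + d%:R = al - 2 :> R by rewrite /al natrB //; ring.
rewrite -/r -/y.
have HL1 := L1z _ N al t; rewrite !lagzP in HL1.
have HL2 := L2 _ N al t.
have HJ : jacobi_hom j.+1 (-1) be r t =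
    acoef R d m j.+1 * (jacobi_hom j.+1 0 be r t - t ^+ 2 * jacobi_hom j 0 be r t).
  have h1 := J1 _ j be r t.
  have hm2 : (2 * m%:R + d%:R - 2 : R) != 0.
    apply: aux_pos; first by rewrite ler_nat.
    by [].
  have hc1 : 2 * j.+1%:R + be != 0.
    have -> : 2 * j.+1%:R + be = (2 * m%:R + d%:R - 2) / 2.
      by rewrite /be natrB // natrM (natS _ j); field.
    by rewrite mulf_neq0 // invr_eq0 pnatr_eq0.
  apply: (mulfI hc1); rewrite h1 mulrA; congr (_ * _).
  have hm0 : (m == 0%N) = false by lia.
  rewrite /acoef hm0 /=.
  rewrite /be natrB // natrM (natS _ j).
  by field.
transitivity (acoef R d m j.+1 * (laguerre N al t * jacobi_hom j.+1 0 be r t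
   - (t ^+ 2 * laguerre N al t) * jacobi_hom j 0 be r t) * y).
  by rewrite HJ; ring.
rewrite HL2 HL1 /bcoef /ccoef /dcoef /al natrD !natS.
ring.
Qed.
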